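(* Let $n\ge 3$ and let $m,a,b,c$ be integers with $m\ge 0$, $a\ge1$, $b\ge 1$, $c\ge 1$ and $a+b+c=n$. Put $$W=(s_{a+b}s_{a+b-1}\cdots s_2)\,(s_1s_2\cdots s_n)\,(s_{n-1}s_{n-2}\cdots s_{a+b+1}).$$ Then $$(m^a,(m+1)^b,m^c)=(s_{a+1}s_{a+2}\cdots s_{a+b-1})\,W^m(\alpha_{a+b}).$$ In particular $(m^a,(m+1)^b,m^c)$ is a positive real root.
   Context: Notation: $(x^a,y^b,z^c)$ denotes the vector in $\mathbb{Z}^n$ whose first $a$ entries equal $x$, next $b$ entries equal $y$ and last $c$ entries equal $z$. The simple roots $\alpha_1,\dots,\alpha_n$ are the standard basis vectors of $\mathbb{Z}^n$. For $1\le i\le n$ the simple reflection $s_i:\mathbb{Z}^n\to\mathbb{Z}^n$ is the linear map which changes only the $i$-th coordinate of $v=(v^1,\dots,v^n)$, replacing $v^i$ by $v^{i-1}+v^{i+1}-v^i$, with indices modulo $n$ in $\{1,\dots,n\}$. Products are compositions of maps (the rightmost factor acts first). Convention: an ascending product $s_js_{j+1}\cdots s_l$ with $l<j$ and a descending product $s_ls_{l-1}\cdots s_j$ with $l<j$ are both the identity map. A real root is a vector $s_{i_1}\cdots s_{i_j}(\alpha_k)$; it is positive if its entries are nonnegative. *)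

(* Defs.v *)
(* Vectors of Z^n are finite functions 'I_n -> int;
   the paper's 1-based coordinate i corresponds to the ordinal i-1. *)
From mathcomp Require Import all_boot all_order all_algebra.
Set Implicit Arguments. Unset Strict Implicit. Unset Printing Implicit Defensive.
Import GRing.Theory Num.Theory.
Local Open Scope ring_scope.

Definition vec (n : nat) := {ffun 'I_n -> int}.

(* 1-based coordinate k of v, with the index taken modulo n in {1,...,n}
   (so coordinate 0 is coordinate n and coordinate n+1 is coordinate 1). *)
Definition vget (n : nat) (v : vec n) (k : nat) : int :=
  match insub ((k + n - 1) %% n)%N with
  | Some j => v j
  | None => 0
  end.

Definition sref (n : nat) (i : nat) (v : vec n) : vec n :=
  [ffun j : 'I_n => if (j.+1 == i)%N
                    then vget v (i - 1) + vget v (i + 1) - v j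
                    else v j].

Definition alpha (n : nat) (k : nat) : vec n :=
  [ffun j : 'I_n => if (j.+1 == k)%N then 1 else 0].

(* ascending product s_j s_{j+1} ... s_l (identity if l < j);
   rightmost factor acts first *)
Definition asc (n : nat) (j l : nat) (v : vec n) : vec n :=
  foldr (@sref n) v (iota j (l.+1 - j)).

Definition desc (n : nat) (l j : nat) (v : vec n) : vec n :=
  foldr (@sref n) v (rev (iota j (l.+1 - j))).

Definition Wmap (n a b : nat) (v : vec n) : vec n :=
  desc (a + b) 2 (asc 1 n (desc n.-1 (a + b + 1) v)).

Definition blockvec (n a b : nat) (x y z : int) : vec n :=
  [ffun j : 'I_n => if (j < a)%N then x else if (j < a + b)%N then y else z].

Definition real_root (n : nat) (v : vec n) : Prop :=
  exists (l : seq nat) (k : nat),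
    [/\ all (fun i => (1 <= i <= n)%N) l, (1 <= k <= n)%N &
        v = foldr (@sref n) (alpha n k) l].

Definition positive_vec (n : nat) (v : vec n) : Prop := forall j, 0 <= v j.

(* Main.v *)
Require Import Defs.
From mathcomp Require Import all_boot all_order all_algebra zify.
Set Implicit Arguments. Unset Strict Implicit.
Local Open Scope ring_scope.

Ltac crush := repeat match goal with
 | |- context [(?x == ?y :> nat)] => case: (@eqP nat x y) => ?
 | |- context [(?x <= ?y)%N] => case: (leqP x y) => ?
 end; rewrite /=; try lia.

Definition agrees (n : nat) (v : vec n) (f : nat -> int) := forall j : 'I_n, v j = f j.+1.

Lemma agrees_ext n (v : vec n) f g : agrees v f ->
  (forall k, (1 <= k <= n)%N -> f k = g k) -> agrees v g.
Proof. move=> H E j; rewrite H; apply: E; exact: ltn_ord. Qed.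

Lemma agrees_eq n (v w : vec n) f : agrees v f -> agrees w f -> v = w.
Proof. by move=> H1 H2; apply/ffunP => j; rewrite H1 H2. Qed.

Lemma vget_ag n (v : vec n) f k : (0 < n)%N -> agrees v f ->
  vget v k = f ((k + n - 1) %% n).+1.
Proof.
move=> n0 H; rewrite /vget; case: insubP => [j _ Hj|Hn].
  by rewrite H Hj.
by rewrite ltn_pmod in Hn.
Qed.

Lemma sref_mid n i (v : vec n) f : (2 <= i)%N -> (i < n)%N -> agrees v f ->
  agrees (sref i v) (fun k => if k == i then f i.-1 + f i.+1 - f i else f k).
Proof.
move=> h1 h2 H j; rewrite ffunE; case: eqP => Hj.
  rewrite !(vget_ag _ _ H) ?(leq_ltn_trans _ h2) // H Hj ?eqxx.
  have -> : (i - 1 + n - 1 = (i - 2) + n)%N by lia.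
  have -> : (i + 1 + n - 1 = i + n)%N by lia.
  rewrite !modnDr !modn_small; try lia.
  by congr (f _ + f _ - _); lia.
by rewrite H.
Qed.

Lemma sref_1 n (v : vec n) f : (2 <= n)%N -> agrees v f ->
  agrees (sref 1 v) (fun k => if k == 1%N then f n + f 2 - f 1 else f k).
Proof.
move=> h1 H j; rewrite ffunE; case: eqP => Hj.
  rewrite !(vget_ag _ _ H) ?(leq_trans _ h1) // H Hj ?eqxx.
  have -> : (1 - 1 + n - 1 = n.-1)%N by lia.
  have -> : (1 + 1 + n - 1 = 1 + n)%N by lia.
  rewrite !modnDr !modn_small; try lia.
  by congr (f _ + f _ - _); lia.
by rewrite H.
Qed.

Lemma sref_n n (v : vec n) f : (2 <= n)%N -> agrees v f ->
  agrees (sref n v) (fun k => if k == n then f n.-1 + f 1 - f n else f k).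
Proof.
move=> h1 H j; rewrite ffunE; case: eqP => Hj.
  rewrite !(vget_ag _ _ H) ?(leq_trans _ h1) // H Hj ?eqxx.
  have -> : (n - 1 + n - 1 = (n - 2) + n)%N by lia.
  have -> : (n + 1 + n - 1 = 0 + n + n)%N by lia.
  rewrite !modnDr !modn_small; try lia.
  by congr (f _ + f _ - _); lia.
by rewrite H.
Qed.
Lemma phaseA n p m (v : vec n) : (2 <= p)%N ->
  agrees v (fun k => if k == p then m%:Z + 1 else m%:Z) ->
  forall d, (p + d < n)%N ->
  agrees (foldr (@sref n) v (rev (iota p.+1 d)))
    (fun k => if (p <= k <= p + d)%N then m%:Z + 1 else m%:Z).
Proof.
move=> hp H; elim=> [|d IH] hd.
  by apply: (agrees_ext H) => k _ /=; crush.
have -> : iota p.+1 d.+1 = iota p.+1 d ++ [:: p.+1 + d] by rewrite -[d.+1]addn1 iotaD.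
rewrite rev_cat /=.
apply: (agrees_ext (sref_mid _ _ (IH _))); try lia.
by move=> k hk /=; crush.
Qed.
Lemma fixed_seq n (v : vec n) f l : all (fun i => (2 <= i < n)%N) l ->
  (forall i, i \in l -> f i.-1 + f i.+1 - f i = f i) -> agrees v f ->
  agrees (foldr (@sref n) v l) f.
Proof.
move=> Hl Hf H; elim: l Hl Hf => [|i l IH] //= /andP[/andP[h1 h2] hl] Hf.
apply: (agrees_ext (sref_mid h1 h2 (IH hl _))).
  by move=> j hj; apply: Hf; rewrite inE hj orbT.
by move=> k _ /=; case: eqP => // ->; apply: Hf; rewrite inE eqxx.
Qed.

Definition u (p m : nat) := fun k : nat => if k == p then m%:Z + 1 else m%:Z.

Lemma phaseB n p m (v : vec n) : (2 <= p)%N -> (p < n)%N ->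
  agrees v (fun k => if (p <= k <= n.-1)%N then m%:Z + 1 else m%:Z) ->
  agrees (asc 1 n v)
    (fun k => if (k == 1%N) || (p < k)%N then m%:Z + 1 else m%:Z).
Proof.
move=> h1 h2 H; rewrite /asc.
have -> : iota 1 (n.+1 - 1) =
   [:: 1%N] ++ iota 2 (p - 2) ++ [:: p] ++ iota p.+1 (n - 1 - p) ++ [:: n].
  have E : (n.+1 - 1 = 1 + ((p - 2) + (1 + ((n - 1 - p) + 1))))%N by lia.
  rewrite E !iotaD /=.
  have -> : (2 + (p - 2) = p)%N by lia.
  have -> : (p + 1 + (n - 1 - p) = n)%N by lia.
  by rewrite !addn1.
rewrite /= -cat1s !foldr_cat /=.
have HB1 := sref_n (leq_trans h1 (ltnW h2)) H.
have HB1' : agrees (sref n v) (fun k => if (p <= k)%N then m%:Z + 1 else m%:Z).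
  by apply: (agrees_ext HB1) => k hk /=; crush.
have A1 : all (fun i => (2 <= i < n)%N) (iota p.+1 (n - 1 - p)).
  by apply/allP => i; rewrite mem_iota => hi; lia.
have A2 : all (fun i => (2 <= i < n)%N) (iota 2 (p - 2)).
  by apply/allP => i; rewrite mem_iota => hi; lia.
have HB2 := fixed_seq A1 _ HB1'.
have HB3 := sref_mid h1 h2 (HB2 _).
have HB3' : agrees (sref p (foldr (@sref n) (sref n v) (iota p.+1 (n - 1 - p)))) (fun k => if (p < k)%N then m%:Z + 1 else m%:Z).
  apply: (agrees_ext (HB3 _)) => [i|k hk /=]; last by crush.
  by rewrite mem_iota => hi /=; crush.
have HB4 := fixed_seq A2 _ HB3'.
have HB5 := sref_1 (leq_trans h1 (ltnW h2)) (HB4 _).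
apply: (agrees_ext (HB5 _)) => [i|k hk /=]; last by crush.
by rewrite mem_iota => hi /=; crush.
Qed.
Lemma phaseC n p m (v : vec n) : (2 <= p)%N -> (p < n)%N ->
  agrees v (fun k => if (k == 1%N) || (p < k)%N then m%:Z + 1 else m%:Z) ->
  forall d, (d.+1 < p)%N ->
  agrees (foldr (@sref n) v (rev (iota 2 d)))
    (fun k => if (k <= d.+1)%N || (p < k)%N then m%:Z + 1 else m%:Z).
Proof.
move=> hp hn H; elim=> [|d IH] hd.
  by apply: (agrees_ext H) => k hk /=; crush.
have -> : iota 2 d.+1 = iota 2 d ++ [:: 2 + d]%N by rewrite -[d.+1]addn1 iotaD.
rewrite rev_cat /=.
apply: (agrees_ext (sref_mid _ _ (IH _))); try lia.
by move=> k hk /=; crush.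
Qed.

Lemma phaseCfull n p m (v : vec n) : (2 <= p)%N -> (p < n)%N ->
  agrees v (fun k => if (k == 1%N) || (p < k)%N then m%:Z + 1 else m%:Z) ->
  agrees (desc p 2 v) (u p m.+1).
Proof.
move=> hp hn H; rewrite /desc.
have -> : iota 2 (p.+1 - 2) = iota 2 (p - 2) ++ [:: p].
  have -> : (p.+1 - 2 = (p - 2) + 1)%N by lia.
  by rewrite iotaD /= subnKC.
rewrite rev_cat /=.
have HC := phaseC hp hn H (d := (p - 2)%N).
apply: (agrees_ext (sref_mid hp hn (HC _))); first lia.
by move=> k hk; rewrite /u /=; crush.
Qed.

Lemma phaseF n p m (v : vec n) : (p < n)%N -> agrees v (u p m) ->
  forall d j, (j + d = p)%N -> (2 <= j)%N ->
  agrees (foldr (@sref n) v (iota j d))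
    (fun k => if (j <= k <= p)%N then m%:Z + 1 else m%:Z).
Proof.
move=> hn H; elim=> [|d IH] j hj h2 /=.
  by apply: (agrees_ext H) => k hk; rewrite /u /=; crush.
apply: (agrees_ext (sref_mid h2 _ (IH j.+1 _ _))); try lia.
by move=> k hk /=; crush.
Qed.

Lemma W_ag n a b m (v : vec n) : (1 <= a)%N -> (1 <= b)%N -> (a + b < n)%N ->
  agrees v (u (a + b) m) -> agrees (Wmap a b v) (u (a + b) m.+1).
Proof.
move=> ha hb hn H; rewrite /Wmap.
have hp : (2 <= a + b)%N by lia.
apply: phaseCfull => //.
apply: phaseB => //.
have := phaseA hp H (d := (n.-1.+1 - (a + b + 1))%N).
rewrite addn1 => HA.
apply: (agrees_ext (HA _)); first lia.
by move=> k hk /=; crush.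
Qed.

Lemma iter_ag n a b m : (1 <= a)%N -> (1 <= b)%N -> (a + b < n)%N ->
  agrees (iter m (Wmap a b) (alpha n (a + b))) (u (a + b) m).
Proof.
move=> ha hb hn; elim: m => [|m IH] /=.
  by move=> j; rewrite ffunE /u; crush.
exact: W_ag.
Qed.

Definition Wlist n a b :=
  (rev (iota 2 ((a + b).+1 - 2)) ++ iota 1 (n.+1 - 1) ++
   rev (iota (a + b + 1) (n.-1.+1 - (a + b + 1))))%N.

Lemma iter_list n a b m (v : vec n) :
  iter m (Wmap a b) v = foldr (@sref n) v (flatten (nseq m (Wlist n a b))).
Proof.
elim: m => [|m IH] //=.
by rewrite foldr_cat -IH /Wmap /desc /asc !foldr_cat.
Qed.
Theorem theorem3p1 (n m a b c : nat) :
  (3 <= n)%N -> (1 <= a)%N -> (1 <= b)%N -> (1 <= c)%N -> (a + b + c = n)%N ->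
  blockvec n a b (m%:Z) (m.+1%:Z) (m%:Z)
    = asc (a + 1) (a + b - 1) (iter m (Wmap a b) (alpha n (a + b)))
  /\ real_root (blockvec n a b (m%:Z) (m.+1%:Z) (m%:Z))
  /\ positive_vec (blockvec n a b (m%:Z) (m.+1%:Z) (m%:Z)).
Proof.
move=> hn ha hb hc habc.
have hp : (a + b < n)%N by lia.
have E : blockvec n a b (m%:Z) (m.+1%:Z) (m%:Z)
    = asc (a + 1) (a + b - 1) (iter m (Wmap a b) (alpha n (a + b))).
  apply: (agrees_eq (f := fun k => if (a + 1 <= k <= a + b)%N then m%:Z + 1 else m%:Z)).
    by move=> j; rewrite ffunE; crush.
  rewrite /asc.
  apply: (phaseF hp (iter_ag m ha hb hp)); lia.
split => //; split.
  exists (iota (a + 1) ((a + b - 1).+1 - (a + 1)) ++ flatten (nseq m (Wlist n a b))), (a + b)%N.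
  split.
  - rewrite all_cat; apply/andP; split.
      by apply/allP => i; rewrite mem_iota => hi; lia.
    elim: m {E} => [|m IH] //=; rewrite all_cat IH andbT.
    rewrite /Wlist !all_cat !all_rev; apply/and3P; split;
      by apply/allP => i; rewrite mem_iota => hi; lia.
  - lia.
  - by rewrite E foldr_cat -iter_list.
by move=> j; rewrite ffunE; crush.
Qed.
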